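(* There exists a (necessarily discontinuous) map $f:[0,1]\to[0,1]$ such that the chain components poset $(\mathfrak{C}_f,\preceq)$ is order isomorphic to $([0,1)\cap\mathbb{Q},\le)$.
   Context: No regularity is assumed on maps. For a map $f:[0,1]\to[0,1]$ with the usual metric: an $\varepsilon$-chain from $x$ to $y$ is a finite sequence $x_0=x,\dots,x_n=y$, $n\ge1$, with $|f(x_i)-x_{i+1}|<\varepsilon$; $x\,\mathcal{C}\,y$ iff for every $\varepsilon>0$ there is an $\varepsilon$-chain from $x$ to $y$; $CR_f=\{x:x\,\mathcal{C}\,x\}$; $x\,E\,y$ iff $x\,\mathcal{C}\,y$ and $y\,\mathcal{C}\,x$; $\mathfrak{C}_f=CR_f/E$ is the set of chain components, partially ordered by $[x]\preceq[y]$ iff $y\,\mathcal{C}\,x$. *)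

(* Defs.v *)
From Stdlib Require Import Reals QArith Lra.
Open Scope R_scope.

Definition I01 (x : R) : Prop := 0 <= x <= 1.

(* a map f : [0,1] -> [0,1] is represented by f : R -> R mapping I01 into I01;
   values outside [0,1] are irrelevant since chains live in [0,1]. *)
Definition maps_I01 (f : R -> R) : Prop := forall x, I01 x -> I01 (f x).

Definition eps_chain (f : R -> R) (eps x y : R) : Prop :=
  exists (n : nat) (l : nat -> R),
    (1 <= n)%nat /\ l 0%nat = x /\ l n = y /\
    (forall i, (i <= n)%nat -> I01 (l i)) /\
    (forall i, (i < n)%nat -> Rabs (f (l i) - l (S i)) < eps).

Definition chain_rel (f : R -> R) (x y : R) : Prop :=
  forall eps, 0 < eps -> eps_chain f eps x y.

Definition CR (f : R -> R) (x : R) : Prop := I01 x /\ chain_rel f x x.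

Definition chainE (f : R -> R) (x y : R) : Prop :=
  chain_rel f x y /\ chain_rel f y x.

Definition component (f : R -> R) (x : R) : R -> Prop :=
  fun y => CR f y /\ chainE f y x.

Definition is_component (f : R -> R) (C : R -> Prop) : Prop :=
  exists x, CR f x /\ C = component f x.

(* [x] <= [y] iff y C x  (well defined on classes) *)
Definition comp_le (f : R -> R) (C D : R -> Prop) : Prop :=
  exists x y, C x /\ D y /\ chain_rel f y x.

Definition QI01 : Type :=
  { r : R | (exists q : Q, r = Q2R q) /\ 0 <= r < 1 }.

(* Main.v *)
Require Import Defs.
From Stdlib Require Import Reals QArith.
From Stdlib Require Import ZArith Lra Lia ClassicalEpsilon ProofIrrelevance.
From Coquelicot Require Import Coquelicot.
Open Scope R_scope.

(* ceiling *)
Definition Cl (x : R) : R := 1 - IZR (up (- x)).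

Lemma Cl_int x : Cl x = IZR (1 - up (- x)).
Proof. unfold Cl. rewrite minus_IZR. reflexivity. Qed.

Lemma Cl_ge x : x <= Cl x.
Proof. unfold Cl. destruct (archimed (- x)). lra. Qed.

Lemma Cl_lt x : Cl x < x + 1.
Proof. unfold Cl. destruct (archimed (- x)). lra. Qed.

Lemma IZR_step a b : IZR a < IZR b -> IZR a + 1 <= IZR b.
Proof.
  intro H. apply lt_IZR in H. rewrite <- plus_IZR. apply IZR_le. lia.
Qed.

Lemma Cl_mono x y : x <= y -> Cl x <= Cl y.
Proof.
  intro H. destruct (Rle_or_lt (Cl x) (Cl y)) as [|H1]; auto.
  rewrite !Cl_int in H1. apply IZR_step in H1. rewrite <- !Cl_int in H1.
  pose proof (Cl_ge y). pose proof (Cl_lt x). lra.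
Qed.

Lemma Cl_IZR z : Cl (IZR z) = IZR z.
Proof.
  unfold Cl. assert (E : up (- IZR z) = (- z + 1)%Z).
  { symmetry. apply up_tech; rewrite ?plus_IZR, ?opp_IZR; lra. }
  rewrite E, plus_IZR, opp_IZR. lra.
Qed.

Lemma Cl_jump z x : IZR z < x -> IZR z + 1 <= Cl x.
Proof.
  intro H. pose proof (Cl_ge x). rewrite Cl_int in *. apply IZR_step. lra.
Qed.

Definition T (n : nat) (t : R) : R := (1/2)^n * Cl (INR (S n) * t) / INR (S n).

Lemma INRS_pos n : 0 < INR (S n).
Proof. apply lt_0_INR. lia. Qed.

Lemma T_bounds n t : 0 <= t <= 1 -> 0 <= T n t <= (1/2)^n.
Proof.
  intro Ht. pose proof (INRS_pos n).
  assert (H0 : 0 <= Cl (INR (S n) * t)).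
  { replace 0 with (Cl (IZR 0)) by (rewrite Cl_IZR; reflexivity).
    apply Cl_mono. change (IZR 0) with 0. apply Rmult_le_pos; lra. }
  assert (H1 : Cl (INR (S n) * t) <= INR (S n)).
  { rewrite INR_IZR_INZ. rewrite <- (Cl_IZR (Z.of_nat (S n))) at 2.
    apply Cl_mono. rewrite <- INR_IZR_INZ. nra. }
  assert (Hp : 0 < (1/2)^n) by (apply pow_lt; lra).
  unfold T. split.
  - apply Rmult_le_pos; [apply Rmult_le_pos; lra| left; apply Rinv_0_lt_compat; lra].
  - apply (Rmult_le_reg_r (INR (S n))); auto.
    unfold Rdiv. rewrite Rmult_assoc, Rinv_l by lra. nra.
Qed.

Lemma T_mono n t t' : t <= t' -> T n t <= T n t'.
Proof.
  intro H. pose proof (INRS_pos n). unfold T, Rdiv.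
  apply Rmult_le_compat_r; [left; apply Rinv_0_lt_compat; lra|].
  apply Rmult_le_compat_l; [left; apply pow_lt; lra|].
  apply Cl_mono. nra.
Qed.

Lemma ex_T t : 0 <= t <= 1 -> ex_series (fun n => T n t).
Proof.
  intro Ht. apply (@ex_series_le R_AbsRing R_CompleteNormedModule _ (fun n => (1/2)^n)).
  - intro n. change (norm (T n t)) with (Rabs (T n t)).
    destruct (T_bounds n t Ht). rewrite Rabs_pos_eq; lra.
  - apply ex_series_geom. rewrite Rabs_pos_eq; lra.
Qed.

Lemma term_le_Series (a : nat -> R) n :
  (forall k, 0 <= a k) -> ex_series a -> a n <= Series a.
Proof.
  intros Hp He.
  assert (Hs : a n <= sum_f_R0 a n).
  { destruct n. simpl. lra. rewrite tech5. pose proof (cond_pos_sum a n Hp). lra. }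
  eapply Rle_trans; [exact Hs|].
  apply sum_incr; auto.
  apply Series_correct in He. apply is_series_Reals in He. exact He.
Qed.

Definition P (t : R) : R := Series (fun n => T n t) / 4.

Lemma P_mono t t' : 0 <= t -> t <= t' -> t' <= 1 -> P t <= P t'.
Proof.
  intros. unfold P. apply Rmult_le_compat_r; [lra|].
  apply Series_le; [|apply ex_T; lra].
  intro n. split; [apply T_bounds; lra| apply T_mono; lra].
Qed.

Lemma P_bounds t : 0 <= t <= 1 -> 0 <= P t <= 1/2.
Proof.
  intro Ht. unfold P. split.
  - pose proof (term_le_Series (fun n => T n t) 0 (fun k => proj1 (T_bounds k t Ht)) (ex_T t Ht)).
    pose proof (proj1 (T_bounds 0 t Ht)). lra.
  - assert (Series (fun n => T n t) <= Series (fun n => (1/2)^n)).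
    { apply Series_le. intro n; apply T_bounds; auto.
      apply ex_series_geom. rewrite Rabs_pos_eq; lra. }
    rewrite Series_geom in H by (rewrite Rabs_pos_eq; lra). lra.
Qed.

Lemma P0 : P 0 = 0.
Proof.
  unfold P. rewrite (Series_ext _ (fun n => 0 * 0)).
  - rewrite (Series_scal_l 0 (fun _ => 0)). lra.
  - intro n. unfold T. rewrite Rmult_0_r. change 0 with (IZR 0). rewrite Cl_IZR. simpl. lra.
Qed.

Definition qof (r : R) : Q :=
  match excluded_middle_informative (exists q, r = Q2R q) with
  | left H => proj1_sig (constructive_indefinite_description _ H)
  | right _ => 0%Q
  end.

Lemma qof_spec r : (exists q, r = Q2R q) -> r = Q2R (qof r).
Proof.
  intro H. unfold qof. destruct excluded_middle_informative as [H'|H']; [|contradiction].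
  destruct constructive_indefinite_description. simpl. auto.
Qed.

Definition nq (r : R) : nat := pred (Pos.to_nat (Qden (qof r))).
Definition g (r : R) : R := (1/2)^(nq r) / INR (S (nq r)) / 4.

Lemma g_pos r : 0 < g r.
Proof.
  unfold g. pose proof (INRS_pos (nq r)). assert (0 < (1/2)^(nq r)) by (apply pow_lt; lra).
  apply Rmult_lt_0_compat; [|lra]. apply Rmult_lt_0_compat; [lra|]. apply Rinv_0_lt_compat; lra.
Qed.

Definition Qr (r : R) : Prop := (exists q : Q, r = Q2R q) /\ 0 <= r < 1.

Lemma T_jump (q : Q) t' n : n = pred (Pos.to_nat (Qden q)) ->
  Q2R q < t' -> (1/2)^n / INR (S n) <= T n t' - T n (Q2R q).
Proof.
  intros Hn Ht. pose proof (INRS_pos n).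
  assert (HS : INR (S n) = IZR (Z.pos (Qden q))).
  { rewrite Hn. rewrite Nat.succ_pred_pos by apply Pos2Nat.is_pos.
    rewrite INR_IZR_INZ. f_equal. apply positive_nat_Z. }
  assert (Hd : IZR (Z.pos (Qden q)) <> 0) by (apply not_0_IZR; lia).
  assert (E : INR (S n) * Q2R q = IZR (Qnum q)).
  { rewrite HS. unfold Q2R. field. auto. }
  assert (J : IZR (Qnum q) + 1 <= Cl (INR (S n) * t')).
  { apply Cl_jump. rewrite <- E. nra. }
  unfold T. rewrite E, Cl_IZR.
  assert (0 < (1/2)^n) by (apply pow_lt; lra).
  assert (Ha : 0 < (1/2)^n / INR (S n)) by (apply Rdiv_lt_0_compat; lra).
  replace ((1/2)^n * Cl (INR (S n) * t') / INR (S n) - (1/2)^n * IZR (Qnum q) / INR (S n))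
    with ((1/2)^n / INR (S n) * (Cl (INR (S n) * t') - IZR (Qnum q))) by (field; lra).
  rewrite <- (Rmult_1_r ((1/2)^n / INR (S n))) at 1.
  apply Rmult_le_compat_l; lra.
Qed.

Lemma jump r t' : Qr r -> r < t' -> t' <= 1 -> P r + g r <= P t'.
Proof.
  intros [Hq Hr] Ht Ht1.
  pose proof (qof_spec r Hq) as E.
  assert (Hr1 : 0 <= r <= 1) by lra. assert (Ht' : 0 <= t' <= 1) by lra.
  assert (D : Series (fun k => T k t' - T k r) = Series (fun k => T k t') - Series (fun k => T k r)).
  { apply Series_minus; apply ex_T; auto. }
  assert (Hex : ex_series (fun k => T k t' - T k r)).
  { apply (@ex_series_le R_AbsRing R_CompleteNormedModule _ (fun n => (1/2)^n)).
    - intro n. change (norm (T n t' - T n r)) with (Rabs (T n t' - T n r)).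
      pose proof (T_mono n r t' ltac:(lra)). pose proof (T_bounds n t' Ht'). pose proof (T_bounds n r Hr1).
      rewrite Rabs_pos_eq; lra.
    - apply ex_series_geom. rewrite Rabs_pos_eq; lra. }
  pose proof (term_le_Series (fun k => T k t' - T k r) (nq r)
     (fun k => ltac:(pose proof (T_mono k r t' ltac:(lra)); lra)) Hex) as HT.
  simpl in HT.
  pose proof (T_jump (qof r) t' (nq r) eq_refl ltac:(rewrite <- E; lra)) as HJ.
  rewrite <- E in HJ.
  unfold P, g. lra.
Qed.

Lemma Qr_le1 r : Qr r -> 0 <= r <= 1.
Proof. intros [_ H]. lra. Qed.

Lemma gap_le1 r : Qr r -> P r + g r <= 1/2.
Proof.
  intro H. pose proof (jump r 1 H ltac:(destruct H; lra) ltac:(lra)).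
  pose proof (P_bounds 1 ltac:(lra)). lra.
Qed.

Lemma gap_unique r r' z : Qr r -> Qr r' -> P r <= z < P r + g r -> P r' <= z < P r' + g r' -> r = r'.
Proof.
  intros H H' Hz Hz'. destruct (total_order_T r r') as [[Hlt|Heq]|Hgt]; auto.
  - pose proof (jump r r' H Hlt ltac:(destruct H'; lra)). lra.
  - pose proof (jump r' r H' Hgt ltac:(destruct H; lra)). lra.
Qed.

Definition inGap (z r : R) : Prop := Qr r /\ P r <= z < P r + g r.

Definition f (z : R) : R :=
  match excluded_middle_informative (exists r, inGap z r) with
  | left H => let r := proj1_sig (constructive_indefinite_description _ H) in
      if Req_EM_T z (P r) then P r else P (r * frac_part (/ (z - P r)))
  | right _ => 0
  end.

Lemma f_gap z r : inGap z r ->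
  f z = if Req_EM_T z (P r) then P r else P (r * frac_part (/ (z - P r))).
Proof.
  intro H. unfold f. destruct excluded_middle_informative as [H'|H']; [|exfalso; eauto].
  destruct constructive_indefinite_description as [r0 H0]. simpl.
  destruct H as [Hr Hz], H0 as [Hr0 Hz0].
  rewrite (gap_unique r0 r z Hr0 Hr Hz0 Hz). reflexivity.
Qed.

Lemma f_nogap z : ~ (exists r, inGap z r) -> f z = 0.
Proof.
  intro H. unfold f. destruct excluded_middle_informative as [H'|H']; [contradiction|reflexivity].
Qed.

Lemma f_node r : Qr r -> f (P r) = P r.
Proof.
  intro H. rewrite (f_gap (P r) r).
  - destruct Req_EM_T; [reflexivity| exfalso; auto].
  - split; auto. pose proof (g_pos r). lra.
Qed.

Lemma frac_bounds x : 0 <= frac_part x < 1.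
Proof. destruct (base_fp x). lra. Qed.

Lemma f_gap_val z r : inGap z r -> exists t, 0 <= t <= r /\ f z = P t.
Proof.
  intro H. rewrite (f_gap z r H). destruct H as [[_ Hr] _].
  destruct Req_EM_T.
  - exists r. split; [lra|auto].
  - exists (r * frac_part (/ (z - P r))). split; [|reflexivity].
    pose proof (frac_bounds (/ (z - P r))). split; nra.
Qed.

Lemma f_range z : 0 <= f z <= 1.
Proof.
  destruct (classic (exists r, inGap z r)) as [[r H]|H].
  - destruct (f_gap_val z r H) as [t [Ht ->]]. destruct H as [[_ Hr] _].
    pose proof (P_bounds t ltac:(lra)). lra.
  - rewrite f_nogap; auto. lra.
Qed.

Lemma KEY r z : Qr r -> z < P r + g r -> f z <= P r.
Proof.
  intros Hr Hz.
  destruct (classic (exists r, inGap z r)) as [[r0 H]|H].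
  - destruct (f_gap_val z r0 H) as [t [Ht ->]]. destruct H as [Hr0 Hz0].
    assert (r0 <= r).
    { destruct (Rle_or_lt r0 r); auto. pose proof (jump r r0 Hr H ltac:(destruct Hr0; lra)). lra. }
    apply P_mono; destruct Hr; lra.
  - rewrite f_nogap; auto. apply P_bounds. apply Qr_le1; auto.
Qed.

Lemma barrier r eps (l : nat -> R) n : Qr r -> 0 < eps <= g r ->
  (forall i, (i < n)%nat -> Rabs (f (l i) - l (S i)) < eps) ->
  f (l 0%nat) <= P r -> forall i, (i < n)%nat -> l (S i) < P r + eps.
Proof.
  intros Hr He Hc H0 i. induction i as [|i IH]; intro Hi.
  - pose proof (Hc 0%nat Hi). apply Rabs_def2 in H. lra.
  - pose proof (Hc (S i) Hi) as H. apply Rabs_def2 in H.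
    assert (l (S i) < P r + eps) by (apply IH; lia).
    pose proof (KEY r (l (S i)) Hr ltac:(lra)). lra.
Qed.

Lemma up_not r r' : Qr r -> Qr r' -> r < r' -> ~ chain_rel f (P r) (P r').
Proof.
  intros Hr Hr' Hlt Hc. destruct (Hc (g r) (g_pos r)) as [n [l [Hn [H0 [Hl [_ Hs]]]]]].
  pose proof (barrier r (g r) l n Hr ltac:(pose proof (g_pos r); lra) Hs
               ltac:(rewrite H0, f_node; auto; lra) (pred n) ltac:(lia)) as B.
  replace (S (pred n)) with n in B by lia. rewrite Hl in B.
  pose proof (jump r r' Hr Hlt ltac:(destruct Hr'; lra)). lra.
Qed.

Lemma frac_nat_plus (N : nat) x : 0 <= x < 1 -> frac_part (INR N + x) = x.
Proof.
  intro Hx. unfold frac_part, Int_part.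
  assert (E : up (INR N + x) = (Z.of_nat N + 1)%Z).
  { symmetry. apply up_tech; rewrite ?plus_IZR, <- INR_IZR_INZ; lra. }
  rewrite E. rewrite minus_IZR, plus_IZR, <- INR_IZR_INZ. lra.
Qed.

Lemma P_I01 r : Qr r -> I01 (P r).
Proof. intro H. pose proof (P_bounds r (Qr_le1 r H)). unfold I01. lra. Qed.

Lemma down r s : Qr r -> Qr s -> s <= r -> chain_rel f (P r) (P s).
Proof.
  intros Hr Hs Hle eps Heps. destruct Hle as [Hlt|Heq].
  - set (e1 := Rmin eps (g r)).
    assert (He1 : 0 < e1) by (unfold e1; apply Rmin_glb_lt; auto; apply g_pos).
    destruct (INR_unbounded (/ e1)) as [N HN].
    assert (r0 : 0 < r) by (destruct Hs; lra).
    assert (Hsr : 0 <= s / r < 1).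
    { destruct Hs as [_ Hs]. split. apply Rdiv_le_0_compat; lra.
      apply (Rmult_lt_reg_r r); auto. unfold Rdiv. rewrite Rmult_assoc, Rinv_l; lra. }
    set (w := INR N + s / r).
    assert (Hw : / e1 < w) by (unfold w; lra).
    assert (Hw0 : 0 < w) by (pose proof (Rinv_0_lt_compat e1 He1); lra).
    set (u := / w).
    assert (Hu0 : 0 < u) by (apply Rinv_0_lt_compat; auto).
    assert (Hu : u < e1).
    { unfold u. rewrite <- (Rinv_inv e1). apply Rinv_lt_contravar; auto.
      apply Rmult_lt_0_compat; auto. apply Rinv_0_lt_compat; auto. }
    assert (He1e : e1 <= eps) by apply Rmin_l.
    assert (He1g : e1 <= g r) by apply Rmin_r.
    set (z := P r + u).
    assert (Hgz : inGap z r) by (split; auto; unfold z; lra).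
    assert (Hfz : f z = P s).
    { rewrite (f_gap z r Hgz). destruct Req_EM_T as [E|E]; [unfold z in E; lra|].
      replace (z - P r) with u by (unfold z; ring). unfold u. rewrite Rinv_inv.
      unfold w. rewrite frac_nat_plus by auto. f_equal. field. lra. }
    exists 2%nat, (fun i => match i with 0%nat => P r | 1%nat => z | _ => P s end).
    split; [lia|]. split; [reflexivity|]. split; [reflexivity|]. split.
    + intros i _. destruct i as [|[|i]]; try (apply P_I01; auto).
      unfold I01, z. pose proof (gap_le1 r Hr). pose proof (P_bounds r (Qr_le1 r Hr)). lra.
    + intros i Hi. destruct i as [|[|i]]; [| |lia].
      * rewrite f_node by auto. unfold z. rewrite Rabs_left; lra.
      * rewrite Hfz. rewrite Rminus_diag, Rabs_R0. auto.
  - subst s. exists 1%nat, (fun _ => P r). split; [lia|]. split; [reflexivity|].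
    split; [reflexivity|]. split.
    + intros; apply P_I01; auto.
    + intros i _. rewrite f_node by auto. rewrite Rminus_diag, Rabs_R0. auto.
Qed.

Lemma node_CR r : Qr r -> CR f (P r).
Proof. intro H. split; [apply P_I01; auto| apply down; auto; lra]. Qed.

Lemma Qr0 : Qr 0.
Proof. split; [|lra]. exists 0%Q. unfold Q2R. simpl. ring. Qed.

Lemma CR_node y : CR f y -> exists r, Qr r /\ y = P r.
Proof.
  intros [Hy Hc].
  destruct (classic (exists r, inGap y r)) as [[r [Hr Hg]]|H].
  - destruct (Req_dec y (P r)) as [E|E]; [exists r; auto|].
    set (eps := Rmin (g r) (y - P r)).
    assert (He : 0 < eps) by (unfold eps; apply Rmin_glb_lt; [apply g_pos|lra]).
    destruct (Hc eps He) as [n [l [Hn [H0 [Hl [_ Hs]]]]]].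
    pose proof (barrier r eps l n Hr ltac:(split; auto; apply Rmin_l) Hs
               ltac:(rewrite H0; apply KEY; auto; lra) (pred n) ltac:(lia)) as B.
    replace (S (pred n)) with n in B by lia. rewrite Hl in B.
    pose proof (Rmin_r (g r) (y - P r)). fold eps in H. lra.
  - assert (Hy0 : 0 < y).
    { destruct Hy as [Hy _]. destruct Hy as [Hy|Hy]; auto. exfalso. apply H. exists 0.
      split; [apply Qr0|]. rewrite P0. pose proof (g_pos 0). subst y. lra. }
    set (eps := Rmin (g 0) y).
    assert (He : 0 < eps) by (unfold eps; apply Rmin_glb_lt; [apply g_pos|lra]).
    destruct (Hc eps He) as [n [l [Hn [H0 [Hl [_ Hs]]]]]].
    pose proof (barrier 0 eps l n Qr0 ltac:(split; auto; apply Rmin_l) Hs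
               ltac:(rewrite H0, f_nogap, P0; auto; lra) (pred n) ltac:(lia)) as B.
    replace (S (pred n)) with n in B by lia. rewrite Hl, P0 in B.
    pose proof (Rmin_r (g 0) y). fold eps in H1. lra.
Qed.

Lemma nodeE r s : Qr r -> Qr s -> chainE f (P r) (P s) -> r = s.
Proof.
  intros Hr Hs [H1 H2]. destruct (total_order_T r s) as [[Hlt|Heq]|Hgt]; auto.
  - exfalso. exact (up_not r s Hr Hs Hlt H1).
  - exfalso. exact (up_not s r Hs Hr Hgt H2).
Qed.

Lemma self_mem r : Qr r -> component f (P r) (P r).
Proof. intro H. split; [apply node_CR; auto| split; apply down; auto; lra]. Qed.

Lemma mem_node r x : Qr r -> component f (P r) x -> x = P r.
Proof.
  intros Hr [Hx HE]. destruct (CR_node x Hx) as [s [Hs ->]].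
  rewrite (nodeE s r Hs Hr HE). reflexivity.
Qed.

Theorem theorem3p2 :
  exists f : R -> R, maps_I01 f /\
    exists phi : QI01 -> (R -> Prop),
      (forall q, is_component f (phi q)) /\
      (forall C, is_component f C -> exists q, phi q = C) /\
      (forall q r, phi q = phi r -> q = r) /\
      (forall q r, proj1_sig q <= proj1_sig r <-> comp_le f (phi q) (phi r)).
Proof.
  exists f. split.
  { intros x _. unfold I01. apply f_range. }
  exists (fun q => component f (P (proj1_sig q))).
  split.
  { intros [q Hq]. exists (P q). split; [apply node_CR; exact Hq| reflexivity]. }
  split.
  { intros C [x [Hx ->]]. destruct (CR_node x Hx) as [r [Hr ->]].
    exists (exist _ r Hr). reflexivity. }
  split.
  { intros [q Hq] [r Hr] Heq. simpl in Heq.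
    pose proof (self_mem q Hq) as M. rewrite Heq in M.
    pose proof (mem_node r (P q) Hr M) as E.
    destruct M as [_ HE]. rewrite E in HE.
    assert (q = r).
    { destruct (total_order_T q r) as [[Hlt|Heq']|Hgt]; auto.
      - pose proof (jump q r Hq Hlt ltac:(destruct Hr; lra)). pose proof (g_pos q). lra.
      - pose proof (jump r q Hr Hgt ltac:(destruct Hq; lra)). pose proof (g_pos r). lra. }
    subst r. f_equal. apply proof_irrelevance. }
  intros [q Hq] [r Hr]. simpl. split.
  - intro Hle. exists (P q), (P r). split; [apply self_mem; auto|].
    split; [apply self_mem; auto|]. apply down; auto.
  - intros [x [y [Hx [Hy Hyx]]]].
    rewrite (mem_node q x Hq Hx) in Hyx. rewrite (mem_node r y Hr Hy) in Hyx.
    destruct (Rle_or_lt q r) as [|Hlt]; auto.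
    exfalso. exact (up_not r q Hr Hq Hlt Hyx).
Qed.
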